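(* Let $\lambda$ be an uncountable cardinal and $S\subseteq\lambda^+$ stationary. Then $\diamondsuit\square'_\lambda(S)\Rightarrow\diamondsuit\square_\lambda(S)\Rightarrow\clubsuit\square_\lambda(S)$.
   Context: $\operatorname{acc}(A)=\{\alpha\in A:\sup(A\cap\alpha)=\alpha\}$, $\operatorname{nacc}(A)=A\setminus\operatorname{acc}(A)$ for a set of ordinals $A$. A $\square_\lambda$-sequence is $\langle C_\alpha:\alpha<\lambda^+\rangle$ such that for every limit $\alpha<\lambda^+$, $C_\alpha$ is a club in $\alpha$ of order type $\le\lambda$, and $\beta\in\operatorname{acc}(C_\alpha)$ implies $C_\beta=C_\alpha\cap\beta$. $\diamondsuit\square'_\lambda(S)$: there is a sequence $\langle (C_\alpha,S_\alpha):\alpha<\lambda^+\rangle$ with $S_\alpha\subseteq\alpha$ such that $C_\alpha$ is a club in $\alpha$ of order type $\le\lambda$ for limit $\alpha$; if $\beta\in\operatorname{acc}(C_\alpha)$ then $C_\beta=C_\alpha\cap\beta$ and $S_\beta=S_\alpha\cap\beta$; and for every club $D\subseteq\lambda^+$ and every $A\subseteq\lambda^+$ there is $\alpha\in S$ with $C_\alpha\subseteq D$, $S_\alpha=A\cap\alpha$, $\sup(\operatorname{acc}(C_\alpha))=\alpha$. $\diamondsuit\square_\lambda(S)$: there are a $\square_\lambda$-sequence $\langle C_\alpha\rangle$, a sequence $\langle S_\alpha\rangle$ with $S_\alpha\subseteq\alpha$ and $S_\beta=S_\alpha\cap\beta$ whenever $\beta\in\operatorname{acc}(C_\alpha)$,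 and a set $S'\subseteq S$ with $S'\cap\operatorname{acc}(C_\alpha)=\emptyset$ for all $\alpha$, such that for every club $D\subseteq\lambda^+$ and every $A\subseteq\lambda^+$ there is $\alpha\in S'$ with $C_\alpha\subseteq D$, $S_\alpha=A\cap\alpha$ and $\sup(\operatorname{acc}(C_\alpha))=\alpha$. $\clubsuit\square_\lambda(S)$: there are a $\square_\lambda$-sequence $\langle C_\alpha\rangle$ and $S'\subseteq S$ with $S'\cap\operatorname{acc}(C_\alpha)=\emptyset$ for all $\alpha<\lambda^+$, such that for every club $D\subseteq\lambda^+$ and every cofinal $A\subseteq\lambda^+$ there is $\alpha\in S'$ with $\operatorname{acc}(C_\alpha)\subseteq D$ and $\operatorname{nacc}(C_\alpha)\subseteq A$. *)

(* Defs.v *)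
(* Ordinals below lambda^+ are modelled by an abstract
   well-ordered type (K, lt) whose order type is forced to be lambda^+. *)
From Stdlib Require Import Wellfounded.

Section SetTheory.
Variables (K : Type) (lt : K -> K -> Prop).

Definition le (x y : K) : Prop := lt x y \/ x = y.

Definition strict_well_order : Prop :=
  well_founded lt /\
  (forall x, ~ lt x x) /\
  (forall x y z, lt x y -> lt y z -> lt x z) /\
  (forall x y, lt x y \/ x = y \/ lt y x).

Definition seg_inj (a b : K) : Prop :=
  exists f : K -> K,
    (forall x y, lt x a -> lt y a -> f x = f y -> x = y) /\
    (forall x, lt x a -> lt (f x) b).

(* (K, lt) is (order-isomorphic to) lam^+ where lam is an uncountable cardinal *)
Definition is_succ_of_uncountable_cardinal (lam : K) : Prop :=
  strict_well_order /\
  (forall b, lt b lam -> ~ seg_inj lam b) /\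
  (~ exists g : K -> nat, forall x y, lt x lam -> lt y lam -> g x = g y -> x = y) /\
  (forall a, seg_inj a lam) /\
  (~ exists f : K -> K,
       (forall x y, f x = f y -> x = y) /\ (forall x, lt (f x) lam)).

Definition is_limit (a : K) : Prop :=
  (exists b, lt b a) /\ (forall b, lt b a -> exists c, lt b c /\ lt c a).

(* acc(A) = { a in A : sup(A cap a) = a }  (literally, as in the paper) *)
Definition acc (A : K -> Prop) (a : K) : Prop :=
  A a /\ (forall b, lt b a -> exists c, A c /\ lt b c /\ lt c a).

Definition nacc (A : K -> Prop) (a : K) : Prop := A a /\ ~ acc A a.

Definition sup_eq (X : K -> Prop) (a : K) : Prop :=
  (forall x, X x -> lt x a) /\ (forall b, lt b a -> exists c, X c /\ lt b c).

Definition club_in (C : K -> Prop) (a : K) : Prop :=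
  (forall x, C x -> lt x a) /\
  (forall b, lt b a -> exists c, C c /\ le b c) /\
  (forall b, lt b a -> (exists c, C c /\ lt c b) ->
      (forall d, lt d b -> exists c, C c /\ lt d c /\ lt c b) -> C b).

Definition club (D : K -> Prop) : Prop :=
  (forall b, exists c, D c /\ le b c) /\
  (forall b, (exists c, D c /\ lt c b) ->
      (forall d, lt d b -> exists c, D c /\ lt d c /\ lt c b) -> D b).

Definition stationary (S : K -> Prop) : Prop :=
  forall D, club D -> exists a, S a /\ D a.

Definition cofinal (A : K -> Prop) : Prop := forall b, exists c, A c /\ le b c.

Definition otp_le (C : K -> Prop) (lam : K) : Prop :=
  exists f : K -> K,
    (forall x y, C x -> C y -> lt x y -> lt (f x) (f y)) /\
    (forall x, C x -> lt (f x) lam).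

Definition subset (A B : K -> Prop) : Prop := forall x, A x -> B x.

Definition eq_cap (X Y : K -> Prop) (b : K) : Prop :=
  forall x, X x <-> (Y x /\ lt x b).

Definition square_seq (lam : K) (C : K -> K -> Prop) : Prop :=
  (forall a, is_limit a -> club_in (C a) a /\ otp_le (C a) lam) /\
  (forall a b, acc (C a) b -> eq_cap (C b) (C a) b).

Definition diamond_square' (lam : K) (S : K -> Prop) : Prop :=
  exists (C Sq : K -> K -> Prop),
    (forall a, subset (Sq a) (fun x => lt x a)) /\
    (forall a, is_limit a -> club_in (C a) a /\ otp_le (C a) lam) /\
    (forall a b, acc (C a) b -> eq_cap (C b) (C a) b /\ eq_cap (Sq b) (Sq a) b) /\
    (forall D A, club D ->
       exists a, S a /\ subset (C a) D /\ eq_cap (Sq a) A a /\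
                 sup_eq (acc (C a)) a).

Definition diamond_square (lam : K) (S : K -> Prop) : Prop :=
  exists (C Sq : K -> K -> Prop) (S' : K -> Prop),
    square_seq lam C /\
    (forall a, subset (Sq a) (fun x => lt x a)) /\
    (forall a b, acc (C a) b -> eq_cap (Sq b) (Sq a) b) /\
    subset S' S /\
    (forall a x, S' x -> ~ acc (C a) x) /\
    (forall D A, club D ->
       exists a, S' a /\ subset (C a) D /\ eq_cap (Sq a) A a /\
                 sup_eq (acc (C a)) a).

Definition club_square (lam : K) (S : K -> Prop) : Prop :=
  exists (C : K -> K -> Prop) (S' : K -> Prop),
    square_seq lam C /\
    subset S' S /\
    (forall a x, S' x -> ~ acc (C a) x) /\
    (forall D A, club D -> cofinal A ->
       exists a, S' a /\ subset (acc (C a)) D /\ subset (nacc (C a)) A).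

End SetTheory.

(* Main.v *)
Require Import Defs.
From Stdlib Require Import Classical ClassicalEpsilon Lia.

Section Main.
Variables (K : Type) (lt : K -> K -> Prop).
Hypothesis wf : well_founded lt.
Hypothesis irr : forall x, ~ lt x x.
Hypothesis tr : forall x y z, lt x y -> lt y z -> lt x z.
Hypothesis tri : forall x y, lt x y \/ x = y \/ lt y x.

Local Notation accK := (acc K lt).
Local Notation naccK := (nacc K lt).
Local Notation leK := (le K lt).

Lemma wf_min (Q : K -> Prop) : (exists x, Q x) -> exists x, Q x /\ forall y, Q y -> ~ lt y x.
Proof.
  intros [x Hx]. revert Hx. induction x as [x IH] using (well_founded_induction wf).
  intros Hx. destruct (classic (exists y, Q y /\ lt y x)) as [[y [Hy Hyx]]|Hn].
  - exact (IH y Hyx Hy).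
  - exists x. split; auto. intros y Hy Hyx. apply Hn; eauto.
Qed.

Lemma le_lt x y z : leK x y -> lt y z -> lt x z.
Proof. intros [H|H] H2; [eauto|subst; auto]. Qed.
Lemma lt_le x y z : lt x y -> leK y z -> lt x z.
Proof. intros H [H2|H2]; [eauto|subst; auto]. Qed.
Lemma not_lt_le x y : ~ lt x y -> leK y x.
Proof. intros H. destruct (tri x y) as [h|[h|h]]; [contradiction|right; auto|left; auto]. Qed.
Lemma le_not_lt x y : leK x y -> ~ lt y x.
Proof. intros H H2. apply (irr x). eapply le_lt; eauto. Qed.

Lemma acc_cap (Cb Ca : K -> Prop) b : eq_cap K lt Cb Ca b ->
  forall x, accK Cb x <-> accK Ca x /\ lt x b.
Proof.
  unfold eq_cap, acc. intros E x; split.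
  - intros [H1 H2]. apply E in H1 as [H1a H1b]. split; [split|]; auto.
    intros d Hd. destruct (H2 d Hd) as [c [Hc [? ?]]]. apply E in Hc as [? ?]. eauto.
  - intros [[H1 H2] Hxb]. split. apply E; auto. intros d Hd.
    destruct (H2 d Hd) as [c [Hc [? ?]]]. exists c. split; [apply E; split; eauto|auto].
Qed.

Lemma acc_sub (X Y : K -> Prop) : (forall x, X x -> Y x) -> forall x, accK X x -> accK Y x.
Proof.
  intros H x [H1 H2]. split; auto. intros d Hd. destruct (H2 d Hd) as [c [? ?]]. eauto.
Qed.

Lemma acc_ext (X Y : K -> Prop) : (forall x, X x <-> Y x) -> forall x, accK X x <-> accK Y x.
Proof. intros H x; split; apply acc_sub; firstorder. Qed.

Section P1.
Variables (S : K -> Prop) (C Sq : K -> K -> Prop).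
Hypothesis coh : forall a b, accK (C a) b -> eq_cap K lt (C b) (C a) b /\ eq_cap K lt (Sq b) (Sq a) b.

Definition P1 a := S a /\ sup_eq K lt (accK (C a)) a.
Definition S1 a := P1 a /\ forall b, accK (C a) b -> ~ P1 b.
Definition C1 g x := C g x /\ forall a, accK (C g) a -> S1 a -> lt a x.

Lemma uniq1 g a1 a2 : accK (C g) a1 -> S1 a1 -> accK (C g) a2 -> S1 a2 -> a1 = a2.
Proof.
  intros H1 S1a H2 S2a.
  destruct (tri a1 a2) as [h|[h|h]]; auto; exfalso.
  - destruct (coh g a2 H2) as [E _]. apply (proj2 S2a a1).
    + apply (acc_cap _ _ _ E). auto.
    + apply S1a.
  - destruct (coh g a1 H1) as [E _]. apply (proj2 S1a a2).
    + apply (acc_cap _ _ _ E). auto.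
    + apply S2a.
Qed.

Lemma C1_sub g x : C1 g x -> C g x.
Proof. intros [? ?]; auto. Qed.

Lemma acc_C1 g x : accK (C1 g) x -> accK (C g) x.
Proof. apply acc_sub, C1_sub. Qed.

Lemma coh1 a b : accK (C1 a) b -> eq_cap K lt (C1 b) (C1 a) b.
Proof.
  intros Ha. pose proof (acc_C1 _ _ Ha) as Hab. destruct (coh a b Hab) as [E _].
  intros x; split.
  - intros [Cbx Hcut]. apply E in Cbx as [Cax xb]. split; auto. split; auto.
    intros a1 H1 S1a. destruct Ha as [[_ Hcb] _].
    pose proof (Hcb a1 H1 S1a) as a1b. apply Hcut; auto. apply (acc_cap _ _ _ E). auto.
  - intros [[Cax Hcut] xb]. split. apply E; auto.
    intros a1 H1 S1a. apply Hcut; auto. apply (acc_cap _ _ _ E) in H1. apply H1.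
Qed.
End P1.

Lemma part1 lam S : diamond_square' K lt lam S -> diamond_square K lt lam S.
Proof.
  intros [C [Sq [HSq [Hcl [Hcoh Hg]]]]].
  exists (C1 S C), Sq, (S1 S C).
  split; [split|].
  { intros a Hlim. destruct (Hcl a Hlim) as [[Cl1 [Cl2 Cl3]] [f [fm fl]]]. split.
    - split; [|split].
      + intros x Hx. apply Cl1, Hx.
      + intros b Hb.
        destruct (classic (exists a0, accK (C a) a0 /\ S1 S C a0)) as [[a0 [Ha0 Sa0]]|Hno].
        * assert (a0a : lt a0 a) by (apply Cl1, Ha0).
          assert (exists m, leK b m /\ leK a0 m /\ lt m a) as [m [bm [a0m ma]]].
          { destruct (tri b a0) as [h|[h|h]].
            - exists a0. split; [left; auto|split; [right; auto|auto]].
            - exists a0. split; [right; auto|split; [right; auto|auto]].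
            - exists b. split; [right; auto|split; [left; auto|auto]]. }
          destruct (proj2 Hlim m ma) as [d [md da]].
          destruct (Cl2 d da) as [c [Cc dc]].
          exists c. split.
          -- split; auto. intros a1 H1 S1a.
             rewrite (uniq1 S C Sq Hcoh a a1 a0 H1 S1a Ha0 Sa0).
             eapply le_lt; eauto. eapply lt_le; eauto.
          -- left. eapply le_lt; eauto. eapply lt_le; eauto.
        * destruct (Cl2 b Hb) as [c [Cc bc]]. exists c. split; auto.
          split; auto. intros a1 H1 S1a. exfalso. apply Hno; eauto.
      + intros b Hb [c [[Cc Hcut] cb]] Hcof. split.
        * apply Cl3; auto. exists c; auto.
          intros d Hd. destruct (Hcof d Hd) as [c' [Hc' ?]]. exists c'. split; auto. apply Hc'.
        * intros a1 H1 S1a. eauto.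
    - exists f. split.
      + intros x y Hx Hy. apply fm; [apply Hx|apply Hy].
      + intros x Hx. apply fl, Hx. }
  { intros a b H. apply (coh1 S C Sq Hcoh a b H). }
  split; [exact HSq|]. split.
  { intros a b H. apply (Hcoh a b (acc_C1 S C a b H)). }
  split; [intros x [[Hx _] _]; exact Hx|]. split.
  { intros a x Sx Hacc. pose proof Hacc as Hacc'. destruct Hacc as [[_ Hcut] _].
    apply (irr x). apply Hcut; auto. apply (acc_C1 S C a x Hacc'). }
  intros D A HD. destruct (Hg D A HD) as [al [Sal [Csub [EqSq Sup]]]].
  assert (Pal : P1 S C al) by (split; auto).
  destruct (wf_min (fun b => (b = al \/ accK (C al) b) /\ P1 S C b)) as [be [[Hbe Pbe] Hmin]].
  { exists al. split; auto. }
  assert (S1be : S1 S C be).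
  { split; auto. intros g Hg' Pg. apply (Hmin g).
    - split; auto. right. destruct Hbe as [->|Hbe]; auto.
      destruct (Hcoh al be Hbe) as [E _]. apply (acc_cap _ _ _ E) in Hg'. apply Hg'.
    - apply (proj1 (proj2 Pbe)). auto. }
  assert (EC : forall x, C1 S C be x <-> C be x).
  { intros x; split; [apply C1_sub|]. intros Hx. split; auto.
    intros a1 H1 S1a. exfalso. apply (proj2 S1be a1 H1). apply S1a. }
  exists be. split; auto. split; [|split].
  - intros x Hx. apply EC in Hx. destruct Hbe as [->|Hbe]; auto.
    destruct (Hcoh al be Hbe) as [E _]. apply E in Hx. apply Csub, Hx.
  - destruct Hbe as [->|Hbe]; auto.
    assert (beal : lt be al) by (apply (proj1 Sup); auto).
    destruct (Hcoh al be Hbe) as [_ E]. intros x. rewrite (E x), (EqSq x).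
    split; [intros [[? ?] ?]; auto|intros [? ?]; split; [split|]; eauto].
  - destruct (proj2 Pbe) as [Sp1 Sp2]. split.
    + intros x Hx. apply Sp1. apply (acc_ext _ _ EC). auto.
    + intros b Hb. destruct (Sp2 b Hb) as [c [Hc ?]]. exists c. split; auto.
      apply (acc_ext _ _ EC). auto.
Qed.

Section P2.
Variables (C Sq : K -> K -> Prop).
Definition T a y := Sq a y \/ C a y.
Definition IsN (X : K -> Prop) g x := X x /\ lt g x /\ forall y, X y -> lt g y -> leK x y.
Definition C2 a x := lt x a /\ (accK (C a) x \/ exists g, naccK (C a) g /\ IsN (T a) g x).

Lemma C2_T a y : C2 a y -> T a y.
Proof. intros [_ [[H _]|[g [_ [H _]]]]]; [right|]; auto. Qed.

Lemma cofC a x : (forall d, lt d x -> exists y, C2 a y /\ lt d y /\ lt y x) ->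
  forall d, lt d x -> exists c, C a c /\ lt d c /\ lt c x.
Proof.
  intros Hcof d Hd. destruct (Hcof d Hd) as [y1 [Hy1 [dy1 y1x]]].
  destruct (Hcof y1 y1x) as [y2 [Hy2 [y12 y2x]]].
  destruct Hy2 as [_ [[Cy2 _]|[g2 [[Cg2 _] [_ [g2y2 Hm]]]]]].
  - exists y2. split; auto. split; eauto.
  - destruct (tri y1 g2) as [h|[h|h]].
    + exists g2. split; auto. split; eauto.
    + subst. exists g2. auto.
    + exfalso. apply (le_not_lt _ _ (Hm y1 (C2_T a y1 Hy1) h)). auto.
Qed.

Lemma acc_C2 a x : accK (C2 a) x -> accK (C a) x.
Proof.
  intros [Hx Hcof]. pose proof (cofC a x Hcof) as HC.
  destruct Hx as [_ [Hacc|[g [[Cg _] [Tx [gx Hm]]]]]]; auto.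
  exfalso. destruct (HC g gx) as [c [Cc [gc cx]]].
  apply (le_not_lt _ _ (Hm c (or_intror Cc) gc)). auto.
Qed.

Lemma IsN_cap (X Y : K -> Prop) b g x : (forall y, X y <-> Y y /\ lt y b) ->
  (IsN X g x <-> IsN Y g x /\ lt x b).
Proof.
  intros E; split.
  - intros [Xx [gx Hm]]. apply E in Xx as [Yx xb]. split; auto. split; auto. split; auto.
    intros y Yy gy. destruct (classic (lt y b)) as [yb|nyb].
    + apply Hm; auto. apply E; auto.
    + left. eapply lt_le; eauto. apply not_lt_le; auto.
  - intros [[Yx [gx Hm]] xb]. split. apply E; auto. split; auto.
    intros y Xy gy. apply E in Xy as [Yy _]. auto.
Qed.

Hypothesis HSq : forall a, subset K (Sq a) (fun x => lt x a).
Hypothesis Hcoh : forall a b, accK (C a) b -> eq_cap K lt (C b) (C a) b.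
Hypothesis HSqcoh : forall a b, accK (C a) b -> eq_cap K lt (Sq b) (Sq a) b.

Lemma coh2 a b : accK (C2 a) b -> eq_cap K lt (C2 b) (C2 a) b.
Proof.
  intros Hab. assert (ba : lt b a) by (apply (proj1 (proj1 Hab))).
  pose proof (acc_C2 _ _ Hab) as Hab'.
  pose proof (Hcoh a b Hab') as E. pose proof (HSqcoh a b Hab') as ES.
  assert (ET : forall y, T b y <-> T a y /\ lt y b).
  { intros y. unfold T. rewrite (E y), (ES y). tauto. }
  assert (EN : forall x, naccK (C b) x <-> naccK (C a) x /\ lt x b).
  { intros x. unfold nacc. rewrite (E x), (acc_cap _ _ _ E x). tauto. }
  intros x. unfold C2. split.
  - intros [xb [Hx|[g [Hg HN]]]].
    + apply (acc_cap _ _ _ E) in Hx as [? ?]. split; [split|]; eauto.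
    + apply EN in Hg as [Hg gb]. apply (IsN_cap _ _ _ _ _ ET) in HN as [HN _].
      split; [split|]; eauto.
  - intros [[xa [Hx|[g [Hg HN]]]] xb]; split; auto.
    + left. apply (acc_cap _ _ _ E). auto.
    + right. exists g. split.
      * apply EN. split; auto. destruct HN as [_ [gx _]]. eauto.
      * apply (IsN_cap _ _ _ _ _ ET). auto.
Qed.

Lemma exN a g : (exists y, T a y /\ lt g y) -> exists y, IsN (T a) g y.
Proof.
  intros H. destruct (wf_min _ H) as [y [[Ty gy] Hm]]. exists y.
  split; auto. split; auto. intros z Tz gz. apply not_lt_le. intros zy. apply (Hm z); auto.
Qed.

Lemma club2 a lam : is_limit K lt a -> club_in K lt (C a) a /\ otp_le K lt (C a) lam ->
  club_in K lt (C2 a) a /\ otp_le K lt (C2 a) lam.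
Proof.
  intros Hlim [[Cl1 [Cl2 Cl3]] [f [fm fl]]].
  assert (Ta : forall y, T a y -> lt y a).
  { intros y [h|h]; [apply HSq|apply Cl1]; auto. }
  split; [split; [|split]|].
  - intros x Hx. apply Hx.
  - intros b Hb. destruct (Cl2 b Hb) as [c [Cc bc]].
    assert (ca : lt c a) by auto.
    destruct (classic (accK (C a) c)) as [Hacc|Hn].
    + exists c. split; auto. split; auto.
    + destruct (exN a c) as [y Hy].
      { destruct (proj2 Hlim c ca) as [d [cd da]]. destruct (Cl2 d da) as [c' [Cc' dc']].
        exists c'. split. right; auto. eapply lt_le; eauto. }
      exists y. split.
      * split. apply Ta, Hy. right. exists c. split; [split|]; auto.
      * left. eapply le_lt; eauto. apply Hy.
  - intros b Hb [c [Hc cb]] Hcof. pose proof (cofC a b Hcof) as HC.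
    assert (Cb : C a b).
    { apply Cl3; auto. destruct (HC c cb) as [c' [? [? ?]]]. exists c'; auto. }
    split; auto. left. split; auto.
  - set (H := fun x => epsilon (inhabits x) (fun c => C a c /\ leK x c /\
                        forall c', C a c' -> leK x c' -> leK c c')).
    assert (HH : forall x, lt x a -> C a (H x) /\ leK x (H x) /\
                        forall c', C a c' -> leK x c' -> leK (H x) c').
    { intros x xa. unfold H. apply epsilon_spec.
      destruct (wf_min (fun c => C a c /\ leK x c)) as [c [[Cc xc] Hm]].
      { destruct (Cl2 x xa) as [c [? ?]]. eauto. }
      exists c. split; auto. split; auto. intros c' Cc' xc'. apply not_lt_le.
      intros h. apply (Hm c'); auto. }
    exists (fun x => f (H x)). split.
    + intros x1 x2 H1 H2 x12. apply fm; try apply HH; try apply H1; try apply H2.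
      pose proof (HH x1 (proj1 H1)) as [C1' [le1 m1]].
      pose proof (HH x2 (proj1 H2)) as [C2' [le2 m2]].
      assert (Hle : leK (H x1) (H x2)).
      { apply m1; auto. left. eapply lt_le; eauto. }
      destruct Hle as [h|Heq]; auto. exfalso.
      assert (noC : forall y, C a y -> leK x1 y -> leK (H x2) y) by (rewrite <- Heq; auto).
      destruct (classic (C a x1)) as [Cx1|nCx1].
      * apply (le_not_lt _ _ (noC x1 Cx1 (or_intror eq_refl))).
        eapply lt_le; eauto.
      * assert (Tx1 : T a x1).
        { destruct H1 as [_ [[h _]|[g [_ [h _]]]]]; [contradiction|auto]. }
        destruct H2 as [_ [[_ Hcof2]|[g2 [[Cg2 _] [_ [g2x2 Hm2]]]]]].
        -- destruct (Hcof2 x1 x12) as [y [Cy [x1y yx2]]].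
           apply (le_not_lt _ _ (noC y Cy (or_introl x1y))). eapply lt_le; eauto.
        -- destruct (classic (leK x1 g2)) as [x1g|nx1g].
           ++ apply (le_not_lt _ _ (noC g2 Cg2 x1g)). eapply lt_le; eauto.
           ++ assert (g2x1 : lt g2 x1).
              { destruct (tri g2 x1) as [h|[h|h]]; auto; exfalso; apply nx1g;
                [right|left]; auto. }
              apply (le_not_lt _ _ (Hm2 x1 Tx1 g2x1)). auto.
    + intros x Hx. apply fl, HH, Hx.
Qed.
End P2.

Fixpoint iter (f : K -> K) (b : K) (n : nat) : K :=
  match n with 0 => b | S k => f (iter f b k) end.

Lemma iter_mono f b : (forall x, lt x (f x)) ->
  forall i j, i < j -> lt (iter f b i) (iter f b j).
Proof.
  intros Hf i j Hij. induction Hij; simpl; eauto.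
Qed.

Lemma iter_le f b : (forall x, lt x (f x)) ->
  forall i j, i <= j -> leK (iter f b i) (iter f b j).
Proof.
  intros Hf i j Hij. destruct (PeanoNat.Nat.eq_dec i j) as [->|h]; [right; auto|].
  left. apply iter_mono; auto. lia.
Qed.

Lemma part2 lam SS (z : K) (zmin : forall y, ~ lt y z) :
  diamond_square K lt lam SS -> club_square K lt lam SS.
Proof.
  intros [C [Sq [S' [[Hcl Hcoh] [HSq [HSqcoh [HS' [Hnacc Hg]]]]]]]].
  exists (C2 C Sq), S'. split; [split|].
  { intros a Hlim. apply club2; auto. }
  { intros a b H. apply coh2; auto. }
  split; auto. split.
  { intros a x Sx H. apply (Hnacc a x Sx). apply (acc_C2 C Sq); auto. }
  intros D A HD HA.
  destruct (classic (S' z)) as [Sz|nSz].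
  { exists z. split; auto. split.
    - intros x [[Hx _] _]. exfalso. apply (zmin x), Hx.
    - intros x [[Hx _] _]. exfalso. apply (zmin x), Hx. }
  assert (Guess : forall D' A', club K lt D' -> exists al, S' al /\ subset K (C al) D' /\
     eq_cap K lt (Sq al) A' al /\ sup_eq K lt (accK (C al)) al /\ is_limit K lt al).
  { intros D' A' HD'. destruct (Hg D' A' HD') as [al [Sal [Cs [Eq Sup]]]].
    exists al. split; auto. split; auto. split; auto. split; auto.
    assert (ex : exists b, lt b al).
    { destruct (tri al z) as [h|[h|h]].
      - exfalso; apply (zmin al h).
      - subst; contradiction.
      - eauto. }
    split; auto. intros b Hb. destruct (proj2 Sup b Hb) as [c [Hc bc]].
    exists c. split; auto. apply (proj1 Sup), Hc. }
  assert (nomax : forall x, exists y, lt x y).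
  { intros m. apply NNPP. intros Hm.
    assert (mmax : forall y, ~ lt m y) by (intros y h; apply Hm; eauto).
    destruct (Guess (fun y => y = m) A) as [al [_ [Cs [_ [Sup [[b0 b0al] _]]]]]].
    - split.
      + intros b. exists m. split; auto. apply not_lt_le. apply mmax.
      + intros b [c [-> mb]]. exfalso. apply (mmax b mb).
    - destruct (proj2 Sup b0 b0al) as [c [Hc _]].
      pose proof (proj1 Sup c Hc) as cal. pose proof (Cs c (proj1 Hc)) as ->.
      apply (mmax al cal). }
  assert (nA : forall x, exists c, A c /\ lt x c).
  { intros x. destruct (nomax x) as [y xy]. destruct (HA y) as [c [Ac yc]].
    exists c. split; auto. eapply lt_le; eauto. }
  assert (nD : forall x, exists c, D c /\ lt x c).
  { intros x. destruct (nomax x) as [y xy]. destruct (proj1 HD y) as [c [Dc yc]].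
    exists c. split; auto. eapply lt_le; eauto. }
  set (fA := fun x => epsilon (inhabits x) (fun c => A c /\ lt x c)).
  set (fD := fun x => epsilon (inhabits x) (fun c => D c /\ lt x c)).
  assert (HfA : forall x, A (fA x) /\ lt x (fA x)) by (intros x; apply epsilon_spec, nA).
  assert (HfD : forall x, D (fD x) /\ lt x (fD x)) by (intros x; apply epsilon_spec, nD).
  set (E := fun d => forall b, lt b d -> exists a, A a /\ lt b a /\ lt a d).
  assert (HD2 : club K lt (fun x => D x /\ E x)).
  { split.
    - intros b. set (st := fun x => fD (fA x)).
      assert (Hst : forall x, lt x (st x)).
      { intros x. apply (tr _ (fA x)); apply HfA || apply HfD. }
      set (h := iter st b).
      destruct (classic (exists u, forall k, lt (h k) u)) as [Hub|Hnub].
      + destruct (wf_min _ Hub) as [de [Hde Hm]].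
        assert (below : forall d, lt d de -> exists k, leK d (h k)).
        { intros d Hd. apply NNPP. intros Hn. apply (Hm d); auto.
          intros k. destruct (tri (h k) d) as [t|[t|t]]; auto; exfalso; apply Hn;
          exists k; [right|left]; auto. }
        exists de. split; [split|].
        * apply (proj2 HD).
          -- exists (h 1). split; auto. apply HfD.
          -- intros d Hd. destruct (below d Hd) as [k Hk]. exists (h (S k)).
             split. apply HfD. split; auto. eapply le_lt; eauto.
        * intros d Hd. destruct (below d Hd) as [k Hk]. exists (fA (h k)).
          split. apply HfA. split. eapply le_lt; eauto. apply HfA.
          apply (tr _ (h (S k))); auto. apply HfD.
        * left. apply (Hde 0).
      + exfalso.
        assert (unb : forall u, exists k, leK u (h k)).
        { intros u. apply NNPP. intros Hn. apply Hnub. exists u. intros k.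
          destruct (tri (h k) u) as [t|[t|t]]; auto; exfalso; apply Hn;
          exists k; [right|left]; auto. }
        set (B := fun y => exists k, y = h k).
        assert (L : forall de, (exists c, B c /\ lt c de) ->
                 (forall d, lt d de -> exists c, B c /\ lt d c /\ lt c de) ->
                 forall N, lt (h N) de).
        { intros de [c [[j ->] jde]] Hcof N. induction N.
          - eapply le_lt; [|exact jde]. apply iter_le; auto. lia.
          - destruct (Hcof _ IHN) as [c2 [[j2 ->] [Nj jde2]]].
            eapply le_lt; [|exact jde2]. apply iter_le; auto.
            destruct (PeanoNat.Nat.le_gt_cases j2 N) as [h1|h1]; [|lia].
            exfalso. apply (le_not_lt _ _ (iter_le st b Hst _ _ h1)). exact Nj. }
        destruct (Guess B A) as [al [_ [Cs [_ [Sup [[b0 b0al] _]]]]]].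
        * split.
          -- intros u. destruct (unb u) as [k Hk]. exists (h k). split; auto. exists k; auto.
          -- intros de Hex Hcof. exfalso. destruct (unb de) as [k Hk].
             apply (le_not_lt _ _ Hk). apply L; auto.
        * destruct (proj2 Sup b0 b0al) as [c [[Cc Hcof] b0c]].
          destruct (Cs c Cc) as [n ->].
          apply (irr (h n)). apply L.
          -- destruct (Hcof b0 b0c) as [c' [Cc' [? ?]]]. exists c'. split; auto.
          -- intros d Hd. destruct (Hcof d Hd) as [c' [Cc' [? ?]]]. exists c'. split; auto.
    - intros de [c [[Dc Ec] cde]] Hcof. split.
      + apply (proj2 HD). exists c; auto.
        intros d Hd. destruct (Hcof d Hd) as [c' [[? ?] ?]]. exists c'; auto.
      + intros b Hb. destruct (Hcof b Hb) as [c' [[_ Ec'] [bc' c'de]]].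
        destruct (Ec' b bc') as [a [Aa [ba ac']]]. exists a. split; auto. split; eauto. }
  destruct (Guess _ A HD2) as [al [Sal [Cs [Eq [Sup Hlim]]]]].
  destruct (Hcl al Hlim) as [[Cl1 [Cl2 Cl3]] _].
  exists al. split; auto. split.
  - intros x Hx. apply (acc_C2 C Sq) in Hx. apply Cs, Hx.
  - intros x [[xal Hx] Hnot].
    destruct Hx as [Hacc|[g [[Cg _] [Tx [gx Hm]]]]].
    + exfalso. apply Hnot. split; [split; auto; left; auto|].
      intros d Hd. destruct Hacc as [_ Hcof].
      destruct (Hcof d Hd) as [ga [Cga [dga gax]]].
      destruct (Hcof ga gax) as [gb [Cgb [gab gbx]]].
      destruct (classic (accK (C al) ga)) as [Ha|Hna].
      * exists ga. split; auto. split; eauto.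
      * destruct (exN C Sq al ga) as [y Hy].
        { exists gb. split; auto. right; auto. }
        exists y. destruct Hy as [Ty [gay Hmy]].
        assert (yx : lt y x) by (apply (le_lt y gb x); [apply Hmy; [right|]; auto|auto]).
        split; [split; eauto|split; eauto].
        right. exists ga. split; [split; auto|split; auto].
    + destruct Tx as [Sx|Cx].
      * apply (Eq x), Sx.
      * exfalso. destruct (proj2 (Cs x Cx) g gx) as [a [Aa [ga ax]]].
        assert (Ta : T C Sq al a) by (left; apply (Eq a); split; eauto).
        apply (le_not_lt _ _ (Hm a Ta ga)). auto.
Qed.
End Main.

Theorem lemma2p4 (K : Type) (lt : K -> K -> Prop) (lam : K) (S : K -> Prop) :
  is_succ_of_uncountable_cardinal K lt lam ->
  stationary K lt S ->
  (diamond_square' K lt lam S -> diamond_square K lt lam S) /\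
  (diamond_square K lt lam S -> club_square K lt lam S).
Proof.
  intros [[wf [irr [tr tri]]] _] _.
  destruct (wf_min K lt wf (fun _ => True)) as [z [_ zmin]].
  { exists lam; auto. }
  split.
  - apply part1; auto.
  - apply (part2 K lt wf irr tr tri lam S z). intros y; apply (zmin y); auto.
Qed.
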